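(* There exist constants $c_1,c_2>0$ (depending only on $d$) such that for all $z,z'\in\mathbb{R}^{2d+1}$: if $c_1\min\{\|z'\|,\|(z')^{-1}\|\}\le\|z\|$, then $c_2\|z\|\le\min\{\|z\circ z'\|,\|z'\circ z\|\}$.
   Context: Let $d\ge1$. Points of $\mathbb{R}^{2d+1}$ are $z=(x,y,t)$ with $x,y\in\mathbb{R}^d$, $t\in\mathbb{R}$. Group law: $(x',y',t')\circ(x,y,t)=(x+x'+ty',y+y',t+t')$; inverse $(x,y,t)^{-1}=(-x+ty,-y,-t)$. Quasi-norm $\|z\|=|x|^{1/3}+|y|+|t|^{1/2}$. *)

(* Defs.v *)
From HB Require Import structures.
From mathcomp Require Import all_boot all_order all_algebra.
From mathcomp Require Import all_classical all_reals all_analysis.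
Set Implicit Arguments. Unset Strict Implicit. Unset Printing Implicit Defensive.
Import Order.TTheory GRing.Theory Num.Theory.
Local Open Scope ring_scope.

Definition pt (R : realType) (d : nat) : Type := ('rV[R]_d * 'rV[R]_d * R)%type.

Definition px {R : realType} {d : nat} (z : pt R d) : 'rV[R]_d := z.1.1.
Definition py {R : realType} {d : nat} (z : pt R d) : 'rV[R]_d := z.1.2.
Definition pt_t {R : realType} {d : nat} (z : pt R d) : R := z.2.

Definition gmul {R : realType} {d : nat} (a b : pt R d) : pt R d :=
  (px b + px a + pt_t b *: py a, py a + py b, pt_t a + pt_t b).

Definition ginv {R : realType} {d : nat} (z : pt R d) : pt R d :=
  (- px z + pt_t z *: py z, - py z, - pt_t z).

Definition eucl {R : realType} {d : nat} (v : 'rV[R]_d) : R :=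
  Num.sqrt (\sum_(i < d) v ord0 i ^+ 2).

Definition qnorm {R : realType} {d : nat} (z : pt R d) : R :=
  powR (eucl (px z)) (3%:R^-1) + eucl (py z) + Num.sqrt `|pt_t z|.

(* Main.v *)
Require Import Defs.
From HB Require Import structures.
From mathcomp Require Import all_boot all_order all_algebra.
From mathcomp Require Import all_classical all_reals all_analysis.
From mathcomp Require Import ring lra.
Import Order.TTheory GRing.Theory Num.Theory.
Local Open Scope ring_scope.

Lemma sqrt_le {R : realType} (x y : R) : 0 <= y -> x <= y ^+ 2 -> Num.sqrt x <= y.
Proof.
move=> y0 xy; apply: (le_trans (y := Num.sqrt (y ^+ 2))).
  by rewrite ler_sqrt // exprn_ge0.
by rewrite sqrtr_sqr ger0_norm.
Qed.

Definition cr {R : realType} (x : R) : R := powR x (3%:R^-1).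

Lemma cr_ge0 {R : realType} (x : R) : 0 <= cr x.
Proof. exact: powR_ge0. Qed.

Lemma cr_cube {R : realType} (x : R) : 0 <= x -> cr x ^+ 3 = x.
Proof.
move=> x0; rewrite /cr -powR_mulrn ?powR_ge0 // -powRrM mulVf ?pnatr_eq0 //.
by rewrite powRr1.
Qed.

Lemma cr_of_cube {R : realType} (q : R) : 0 <= q -> cr (q ^+ 3) = q.
Proof.
move=> q0; rewrite /cr -powR_mulrn // -powRrM mulfV ?pnatr_eq0 //.
by rewrite powRr1.
Qed.

Lemma cr_le {R : realType} (p q : R) : 0 <= p -> 0 <= q -> p <= q ^+ 3 -> cr p <= q.
Proof.
move=> p0 q0 pq; rewrite -(@cr_of_cube _ q q0) /cr.
apply: ge0_ler_powR => //; rewrite ?nnegrE ?invr_ge0 ?ler0n // exprn_ge0 //.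
Qed.

Lemma cr0 {R : realType} : cr (0 : R) = 0.
Proof. by rewrite /cr powR0 // invr_eq0 pnatr_eq0. Qed.

Lemma cr_core {R : realType} (E Ep Eq s e : R) :
  0 <= E -> 0 <= Ep -> 0 <= Eq -> 0 <= s -> 0 <= e ->
  E <= Ep + Eq + s ^+ 2 * e ->
  cr E <= cr Ep + cr Eq + (2 * s + e) / 3%:R.
Proof.
move=> E0 p0 q0 s0 e0 H.
have P0 := cr_ge0 Ep; have Q0 := cr_ge0 Eq.
have Pc := @cr_cube _ _ p0; have Qc := @cr_cube _ _ q0.
set P := cr Ep in P0 Pc *; set Q := cr Eq in Q0 Qc *.
set W := (2 * s + e) / 3%:R.
have W0 : 0 <= W by rewrite /W; apply: divr_ge0; [nra| rewrite ler0n].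
have HW : s ^+ 2 * e <= W ^+ 3.
  have -> : W ^+ 3 = (2 * s + e) ^+ 3 / 27%:R by rewrite /W; field.
  rewrite ler_pdivlMr ?ltr0n //.
  have : 0 <= (s - e) ^+ 2 * (8%:R * s + e) by apply: mulr_ge0; [exact: sqr_ge0| nra].
  nra.
apply: cr_le => //; first by nra.
have : P ^+ 3 + Q ^+ 3 + W ^+ 3 <= (P + Q + W) ^+ 3.
  have hPQ : 0 <= P * Q by nra.
  have hPW : 0 <= P * W by nra.
  have hQW : 0 <= Q * W by nra.
  nra.
nra.
Qed.

Lemma sum_sq0 {R : realType} {d : nat} (a b : 'I_d -> R) :
  \sum_i a i ^+ 2 = 0 -> \sum_i a i * b i = 0.
Proof.
move=> H; have H' := psumr_eq0P (fun i _ => sqr_ge0 (a i)) H.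
rewrite big1 // => i _; have /eqP := H' i isT.
by rewrite sqrf_eq0 => /eqP ->; rewrite mul0r.
Qed.

Lemma CS {R : realType} {d : nat} (a b : 'I_d -> R) :
  \sum_i a i * b i <= Num.sqrt (\sum_i a i ^+ 2) * Num.sqrt (\sum_i b i ^+ 2).
Proof.
set Sa := \sum_i a i ^+ 2; set Sb := \sum_i b i ^+ 2.
have Sa0 : 0 <= Sa by apply: sumr_ge0 => i _; exact: sqr_ge0.
have Sb0 : 0 <= Sb by apply: sumr_ge0 => i _; exact: sqr_ge0.
set A := Num.sqrt Sa; set B := Num.sqrt Sb.
have A0 : 0 <= A := sqrtr_ge0 _. have B0 : 0 <= B := sqrtr_ge0 _.
have hA : A ^+ 2 = Sa := sqr_sqrtr Sa0.
have hB : B ^+ 2 = Sb := sqr_sqrtr Sb0.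
have key : 2%:R * (A * B) * \sum_i a i * b i <= B ^+ 2 * Sa + A ^+ 2 * Sb.
  rewrite /Sa /Sb !mulr_sumr -big_split /=; apply: ler_sum => i _.
  have : 0 <= (B * a i - A * b i) ^+ 2 := sqr_ge0 _.
  nra.
have [AB0|] := eqVneq (A * B) 0.
  move/eqP: AB0; rewrite mulf_eq0 => /orP[]/eqP h.
    have : Sa = 0 by rewrite -hA h expr0n.
    by move/(@sum_sq0 _ _ a b) ->; exact: mulr_ge0.
  have : Sb = 0 by rewrite -hB h expr0n.
  move/(@sum_sq0 _ _ b a); under eq_bigr do rewrite mulrC.
  by move ->; exact: mulr_ge0.
move=> ABn; have ABp : 0 < A * B by rewrite lt_def ABn mulr_ge0.
rewrite -hA -hB in key; nra.
Qed.

Lemma eucl_ge0 {R : realType} {d : nat} (v : 'rV[R]_d) : 0 <= eucl v.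
Proof. exact: sqrtr_ge0. Qed.

Lemma eucl_add {R : realType} {d : nat} (u v : 'rV[R]_d) :
  eucl (u + v) <= eucl u + eucl v.
Proof.
rewrite /eucl.
have -> : \sum_i ((u + v) ord0 i) ^+ 2 = \sum_i (u ord0 i) ^+ 2 +
   2%:R * \sum_i (u ord0 i * v ord0 i) + \sum_i (v ord0 i) ^+ 2.
  by rewrite mulr_sumr -!big_split; apply: eq_bigr => i _; rewrite mxE /=; ring.
have := CS (fun i => u ord0 i) (fun i => v ord0 i).
set Sa := \sum_i _ ^+ 2; set Sb := \sum_i _ ^+ 2; set X := \sum_i _.
move=> /= hcs.
have Sa0 : 0 <= Sa by apply: sumr_ge0 => i _; exact: sqr_ge0.
have Sb0 : 0 <= Sb by apply: sumr_ge0 => i _; exact: sqr_ge0.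
have hA := sqr_sqrtr Sa0; have hB := sqr_sqrtr Sb0.
have A0 := sqrtr_ge0 Sa; have B0 := sqrtr_ge0 Sb.
apply: sqrt_le; first by nra.
rewrite sqrrD hA hB; nra.
Qed.

Lemma eucl_scale {R : realType} {d : nat} (t : R) (v : 'rV[R]_d) :
  eucl (t *: v) = `|t| * eucl v.
Proof.
rewrite /eucl.
have -> : \sum_i ((t *: v) ord0 i) ^+ 2 = t ^+ 2 * \sum_i (v ord0 i) ^+ 2.
  by rewrite mulr_sumr; apply: eq_bigr => i _; rewrite mxE; ring.
by rewrite sqrtrM ?sqr_ge0 // sqrtr_sqr.
Qed.

Lemma eucl_opp {R : realType} {d : nat} (v : 'rV[R]_d) : eucl (- v) = eucl v.
Proof. by rewrite -scaleN1r eucl_scale normrN normr1 mul1r. Qed.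

Lemma sqrt_abs_add {R : realType} (a b : R) :
  Num.sqrt `|a + b| <= Num.sqrt `|a| + Num.sqrt `|b|.
Proof.
have ha := sqr_sqrtr (normr_ge0 a); have hb := sqr_sqrtr (normr_ge0 b).
have a0 := sqrtr_ge0 `|a|; have b0 := sqrtr_ge0 `|b|.
apply: sqrt_le; first by nra.
rewrite sqrrD ha hb; have := ler_normD a b; nra.
Qed.

Lemma xbound {R : realType} {d : nat} (p q r : 'rV[R]_d) (t : R) :
  cr (eucl (p + q + t *: r)) <=
  cr (eucl p) + cr (eucl q) + (2%:R * Num.sqrt `|t| + eucl r) / 3%:R.
Proof.
apply: cr_core; rewrite ?eucl_ge0 ?sqrtr_ge0 //.
rewrite sqr_sqrtr ?normr_ge0 // -eucl_scale.
apply: (le_trans (eucl_add _ _)); rewrite lerD2r; exact: eucl_add.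
Qed.

Lemma qtri {R : realType} {d : nat} (a b : pt R d) :
  qnorm (gmul a b) <= 2%:R * (qnorm a + qnorm b).
Proof.
have hx := xbound (px b) (px a) (py a) (pt_t b).
have hy := eucl_add (py a) (py b).
have ht := sqrt_abs_add (pt_t a) (pt_t b).
rewrite /cr in hx.
have := powR_ge0 (eucl (px a)) (3%:R^-1).
have := powR_ge0 (eucl (px b)) (3%:R^-1).
have := eucl_ge0 (py a); have := eucl_ge0 (py b).
have := sqrtr_ge0 `|pt_t a|; have := sqrtr_ge0 `|pt_t b|.
rewrite /qnorm /=; lra.
Qed.

Lemma qinv {R : realType} {d : nat} (z : pt R d) :
  qnorm (ginv z) <= 2%:R * qnorm z.
Proof.
have hx : cr (eucl (- px z + pt_t z *: py z)) <=
   cr (eucl (px z)) + cr 0 + (2%:R * Num.sqrt `|pt_t z| + eucl (py z)) / 3%:R.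
  apply: cr_core; rewrite ?eucl_ge0 ?sqrtr_ge0 //.
  rewrite sqr_sqrtr ?normr_ge0 // -eucl_scale addr0 -(eucl_opp (px z)).
  exact: eucl_add.
rewrite cr0 /cr in hx.
have := powR_ge0 (eucl (px z)) (3%:R^-1).
have := eucl_ge0 (py z); have := sqrtr_ge0 `|pt_t z|.
rewrite /qnorm /= eucl_opp normrN; lra.
Qed.

Lemma gid1 {R : realType} {d : nat} (z z' : pt R d) :
  gmul (gmul z z') (ginv z') = z.
Proof.
case: z => [[x y] t]; case: z' => [[x' y'] t'].
rewrite /gmul /ginv /px /py /pt_t /=.
congr (_, _, _); try (apply/rowP => i; rewrite !mxE); ring.
Qed.

Lemma gid2 {R : realType} {d : nat} (z z' : pt R d) :
  gmul (ginv z') (gmul z' z) = z.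
Proof.
case: z => [[x y] t]; case: z' => [[x' y'] t'].
rewrite /gmul /ginv /px /py /pt_t /=.
congr (_, _, _); try (apply/rowP => i; rewrite !mxE); ring.
Qed.

Theorem mainTheorem6 (R : realType) (d : nat) (hd : (1 <= d)%N) :
  exists c1 c2 : R, 0 < c1 /\ 0 < c2 /\
    forall z z' : pt R d,
      c1 * Num.min (qnorm z') (qnorm (ginv z')) <= qnorm z ->
      c2 * qnorm z <= Num.min (qnorm (gmul z z')) (qnorm (gmul z' z)).
Proof.
exists 8%:R, (4%:R)^-1; split; first by rewrite ltr0n.
split; first by rewrite invr_gt0 ltr0n.
move=> z z' H.
set m := Num.min _ _ in H.
have hm : qnorm (ginv z') / 2%:R <= m.
  rewrite /m le_min; apply/andP; split.
    have := qinv z'; have := qinv (ginv z'); lra.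
  have : 0 <= qnorm (ginv z').
    rewrite /qnorm; have := powR_ge0 (eucl (px (ginv z'))) (3%:R^-1).
    have := eucl_ge0 (py (ginv z')); have := sqrtr_ge0 `|pt_t (ginv z')|; lra.
  lra.
have h1 := qtri (gmul z z') (ginv z'); rewrite gid1 in h1.
have h2 := qtri (ginv z') (gmul z' z); rewrite gid2 in h2.
rewrite le_min; apply/andP; split; lra.
Qed.
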